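(* Let $S$ be a submonoid of $\mathbb N^d$. Then $S$ is a PI-monoid if and only if $m(S)\in S\setminus\{0\}$ and $(S\setminus\{0\})-m(S)=\{\mathbf s-m(S):\mathbf s\in S\setminus\{0\}\}$ is a submonoid of $\mathbb N^d$.
   Context: $\preceq_{\mathbb N^d}$ is the componentwise partial order on $\mathbb N^d$; the multiplicity of $S$ is $m(S)=\inf_{\preceq_{\mathbb N^d}}(S\setminus\{0\})$. $S$ is a PI-monoid if there exist a submonoid $T$ of $\mathbb N^d$ and $\mathbf a\in T\setminus\{0\}$ with $S=(\mathbf a+T)\cup\{0\}$. *)

(* Defs.v *)
From mathcomp Require Import all_boot.
Set Implicit Arguments. Unset Strict Implicit. Unset Printing Implicit Defensive.

Definition vec (d : nat) := 'I_d -> nat.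

Definition vzero (d : nat) : vec d := fun _ => 0.
Definition vadd d (x y : vec d) : vec d := fun i => x i + y i.
Arguments vzero : clear implicits.
(* truncated componentwise subtraction; only used as s - m with m <= s *)
Definition vsub d (x y : vec d) : vec d := fun i => x i - y i.

Definition vle d (x y : vec d) : Prop := forall i, x i <= y i.

Definition submonoid d (S : vec d -> Prop) : Prop :=
  S (vzero d) /\ (forall x y, S x -> S y -> S (vadd x y)).

Definition nonzero_part d (S : vec d -> Prop) : vec d -> Prop :=
  fun x => S x /\ x <> vzero d.

Definition is_inf d (m : vec d) (A : vec d -> Prop) : Prop :=
  (forall a, A a -> vle m a) /\
  (forall l, (forall a, A a -> vle l a) -> vle l m).

Definition PI_monoid d (S : vec d -> Prop) : Prop :=
  exists (T : vec d -> Prop) (a : vec d),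
    submonoid T /\ T a /\ a <> vzero d /\
    (forall x, S x <-> (x = vzero d \/ exists t, T t /\ x = vadd a t)).

Definition translate_down d (A : vec d -> Prop) (m : vec d) : vec d -> Prop :=
  fun v => exists s, A s /\ v = vsub s m.

(* Main.v *)
Require Import Defs.
From Stdlib Require Import FunctionalExtensionality Classical.
From mathcomp Require Import all_boot.

Lemma vadd_subK d (m x : vec d) : vle m x -> vadd m (vsub x m) = x.
Proof. move=> h; apply: functional_extensionality => i; rewrite /vadd /vsub subnKC //. Qed.

Lemma vsub_addK d (m t : vec d) : vsub (vadd m t) m = t.
Proof. apply: functional_extensionality => i; rewrite /vadd /vsub addKn //. Qed.

Lemma vadd_nz d (a t : vec d) : a <> vzero d -> vadd a t <> vzero d.
Proof.
move=> ha e; apply: ha; apply: functional_extensionality => i.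
have := f_equal (fun f => f i) e; rewrite /vadd /vzero => /eqP.
by rewrite addn_eq0 => /andP [/eqP -> _].
Qed.

Lemma vadd_zero d (a : vec d) : vadd a (vzero d) = a.
Proof. apply: functional_extensionality => i; rewrite /vadd /vzero addn0 //. Qed.

(* "m(S) ∈ S \ {0}" is read as: the infimum m(S) of S \ {0} exists and lies in
   S \ {0} (the infimum is unique when it exists). *)
Theorem proposition5p5 (d : nat) (S : vec d -> Prop) (hS : submonoid S) :
  PI_monoid S <->
  exists m : vec d,
    is_inf m (nonzero_part S) /\ nonzero_part S m /\
    submonoid (translate_down (nonzero_part S) m).
Proof.
case: hS => hS0 hSadd; split.
- move=> [T [a [[hT0 hTadd] [hTa [ha hSe]]]]].
  have hSa : S a by apply/hSe; right; exists (vzero d); rewrite vadd_zero.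
  have nz : forall x, nonzero_part S x -> exists t, T t /\ x = vadd a t.
    move=> x [/hSe [-> //|]] //.
  exists a; split; [split|split].
  + move=> x /nz [t [_ ->]] i; rewrite /vadd; exact: leq_addr.
  + by move=> l hl; apply: hl.
  + by [].
  + split.
    * by exists (vadd a (vzero d)); rewrite vsub_addK vadd_zero.
    * move=> x y [s1 [/nz [t1 [ht1 ->]] ->]] [s2 [/nz [t2 [ht2 ->]] ->]].
      exists (vadd a (vadd t1 t2)); rewrite !vsub_addK; split=> //.
      split; last exact: vadd_nz.
      by apply/hSe; right; exists (vadd t1 t2); split=> //; apply: hTadd.
- move=> [m [[hinf _] [[hSm hm] hT]]].
  exists (translate_down (nonzero_part S) m), m; split=> //; split.
    exists (vadd m m); rewrite vsub_addK; split=> //; split; first exact: hSadd.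
    exact: vadd_nz.
  split=> // x; split.
  + move=> hx; case: (classic (x = vzero d)) => [->|nx]; first by left.
    right; exists (vsub x m); split; first by exists x.
    by rewrite vadd_subK //; apply: hinf.
  + move=> [->//|[t [[s [hs ->]] ->]]]; rewrite vadd_subK; first by case: hs.
    exact: hinf.
Qed.
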